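(* Consider an implication of canonical form $(\ast)$ and an environment $\eta$. Let $L=\{(i,j)\mid1\le i\le M,1\le j\le N\}$. Suppose (S1) for all $(i,j)\in L$ with $\Pi(i)\not\ge\Omega(j)$ there is $c\in V$ with $\Pi(i)(c)<\Omega(j)(c)$ and such that $\Pi(k)(c)=\Omega(l)(c)$ for every $(k,l)\in L$ with $\Pi(k)\ge\Omega(l)$; and (S2) for every $1\le j\le N$ there is $c\in V$ with $\Omega(j)(c)>0$ and such that $\Pi(k)(c)=\Omega(l)(c)$ for every $(k,l)\in L$ with $\Pi(k)\ge\Omega(l)$. If the implication is unary $\eta$-valid, then the Parametricity Condition holds for it and $\eta$ (and hence, by the preceding proposition, it is binary $\eta$-valid).
   Context: $\mathsf{Heap}$: finite partial functions $\mathsf{PosInt}\to\mathsf{Int}$; $g\sqsubseteq h$ means $h$ extends $g$; $h\cdot g$ union of disjoint heaps; componentwise on $\mathsf{Heap}^n$. $\mathsf{IRel}_n$: upward closed subsets of $\mathsf{Heap}^n$; $p*q=\{\mathbf f\cdot\mathbf g\mid\mathbf f\in p,\mathbf g\in q,\text{componentwise disjoint}\}$; $\Delta_n(X)=\{(h_1,\dots,h_n)\mid\exists f\in X.\ \forall k.\ f\sqsubseteq h_k\}$. Assertions: built from primitive assertions $P$, assertion variables, $\mathsf{true},\mathsf{false},\wedge,\vee,*$, quantifiers over integer variables. $n$-ary meaning under $\eta$ and $\rho:\mathsf{AVar}\to\mathsf{IRel}_n$: $[\![P]\!]^n=\Delta_n([\![P]\!]^{\mathrm{prim}}_\eta)$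 (standard meaning $[\![P]\!]^{\mathrm{prim}}_\eta\subseteq\mathsf{Heap}$), $[\![a]\!]^n=\rho(a)$, connectives by $\mathsf{Heap}^n,\emptyset,\cap,\cup,*$, quantifiers by unions/intersections. $n$-ary $\eta$-validity of $\varphi\Rightarrow\psi$: $[\![\varphi]\!]^n_{\eta,\rho}\subseteq[\![\psi]\!]^n_{\eta,\rho}$ for all $\rho:\mathsf{AVar}\to\mathsf{IRel}_n$ (unary: $n=1$, binary: $n=2$). Canonical form $(\ast)$: $\bigwedge_{i=1}^M\varphi_i*a_{i,1}*\cdots*a_{i,M_i}\Rightarrow\bigvee_{j=1}^N\psi_j*b_{j,1}*\cdots*b_{j,N_j}$, $M\ge1$, $N\ge0$, $\varphi_i,\psi_j$ free of assertion variables, every $b_{j,k}$ among the $a_{i,k}$. $V=\{a_{i,k}\}$; $\Pi(i)(c)=|\{k\mid a_{i,k}=c\}|$, $\Omega(j)(c)=|\{k\mid b_{j,k}=c\}|$; $\Pi(i)\ge\Omega(j)$ iff $\Pi(i)(c)\ge\Omega(j)(c)$ for all $c\in V$, and $\Pi(i)\not\ge\Omega(j)$ otherwise. Disjunct $j$ is empty if $N_j=0$. Parametricity Condition: for all $h,h_1,\dots,h_M\in\mathsf{Heap}$ with $h_i\sqsubseteq h$ and $h_i\in[\![\varphi_i]\!]^1_\eta$ for all $i$, either (1) there are $i,j$ with $h_i\in[\![\psi_j]\!]^1_\eta$ and $\Pi(i)\ge\Omega(j)$, or (2) there is an empty disjunct $j$ with $h\in[\![\psi_j]\!]^1_\eta$.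 *)

(* Defs.v *)
From Stdlib Require Import ZArith List PeanoNat Fin.
Import ListNotations.
Set Implicit Arguments.

Definition heap : Type :=
  { f : positive -> option Z | exists l : list positive, forall p, f p <> None -> In p l }.

Definition hget (h : heap) : positive -> option Z := proj1_sig h.

Definition hsub (g h : heap) : Prop :=
  forall p v, hget g p = Some v -> hget h p = Some v.

Definition hdisj (g f : heap) : Prop :=
  forall p, hget g p = None \/ hget f p = None.

Definition hunion (g f h : heap) : Prop :=
  hdisj g f /\
  forall p, hget h p = match hget g p with Some v => Some v | None => hget f p end.

Definition hvec (n : nat) : Type := Fin.t n -> heap.

Definition upclosed (n : nat) (p : hvec n -> Prop) : Prop :=
  forall g h, p g -> (forall k, hsub (g k) (h k)) -> p h.

Inductive assertion (Prim : Type) : Type :=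
| APrim : Prim -> assertion Prim
| AVar  : nat -> assertion Prim
| ATrue : assertion Prim
| AFalse : assertion Prim
| AAnd  : assertion Prim -> assertion Prim -> assertion Prim
| AOr   : assertion Prim -> assertion Prim -> assertion Prim
| AStar : assertion Prim -> assertion Prim -> assertion Prim
| AEx   : nat -> assertion Prim -> assertion Prim
| AAll  : nat -> assertion Prim -> assertion Prim.

Arguments ATrue {Prim}.
Arguments AFalse {Prim}.
Arguments AVar {Prim} _.

Fixpoint avar_free (Prim : Type) (a : assertion Prim) : Prop :=
  match a with
  | APrim _ => True
  | AVar _ => False
  | ATrue | AFalse => True
  | AAnd a b | AOr a b | AStar a b => avar_free a /\ avar_free b
  | AEx _ a | AAll _ a => avar_free a
  end.

Definition env := nat -> Z.
Definition upd (eta : env) (x : nat) (v : Z) : env :=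
  fun y => if Nat.eqb y x then v else eta y.

(* n-ary meaning; prim_sem P eta is the standard meaning [[P]]^prim_eta ⊆ Heap *)
Fixpoint sem (Prim : Type) (prim_sem : Prim -> env -> heap -> Prop) (n : nat)
  (rho : nat -> hvec n -> Prop) (a : assertion Prim) (eta : env) (h : hvec n) : Prop :=
  match a with
  | APrim P => exists f, prim_sem P eta f /\ forall k, hsub f (h k)
  | AVar x => rho x h
  | ATrue => True
  | AFalse => False
  | AAnd a b => sem prim_sem rho a eta h /\ sem prim_sem rho b eta h
  | AOr a b => sem prim_sem rho a eta h \/ sem prim_sem rho b eta h
  | AStar a b => exists f g : hvec n,
      sem prim_sem rho a eta f /\ sem prim_sem rho b eta g /\
      forall k, hunion (f k) (g k) (h k)
  | AEx x a => exists v : Z, sem prim_sem rho a (upd eta x v) h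
  | AAll x a => forall v : Z, sem prim_sem rho a (upd eta x v) h
  end.

Definition nvalid (Prim : Type) (prim_sem : Prim -> env -> heap -> Prop) (n : nat)
  (phi psi : assertion Prim) (eta : env) : Prop :=
  forall rho : nat -> hvec n -> Prop, (forall x, upclosed (rho x)) ->
  forall h, sem prim_sem rho phi eta h -> sem prim_sem rho psi eta h.

Definition unary_valid (Prim : Type) prim_sem (phi psi : assertion Prim) eta :=
  @nvalid Prim prim_sem 1 phi psi eta.

(* unary meaning [[phi]]^1_eta of an assertion-variable-free phi, as a set of heaps
   (rho is irrelevant for such phi; we fix it to the full relation). *)
Definition sem1 (Prim : Type) prim_sem (phi : assertion Prim) (eta : env) (h : heap) : Prop :=
  @sem Prim prim_sem 1 (fun _ _ => True) phi eta (fun _ => h).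

(* lhs = [(phi_1,[a_11;..;a_1M1]); ...; (phi_M, ...)]
   rhs = [(psi_1,[b_11;..;b_1N1]); ...; (psi_N, ...)] *)
Definition clause (Prim : Type) : Type := (assertion Prim * list nat)%type.

Definition star_vars (Prim : Type) (c : clause Prim) : assertion Prim :=
  fold_left (fun acc a => AStar acc (AVar a)) (snd c) (fst c).

Fixpoint big_and (Prim : Type) (l : list (assertion Prim)) : assertion Prim :=
  match l with
  | [] => ATrue
  | [x] => x
  | x :: xs => AAnd x (big_and xs)
  end.

Fixpoint big_or (Prim : Type) (l : list (assertion Prim)) : assertion Prim :=
  match l with
  | [] => AFalse
  | [x] => x
  | x :: xs => AOr x (big_or xs)
  end.

Definition canon_lhs (Prim : Type) (lhs : list (clause Prim)) : assertion Prim :=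
  big_and (map (@star_vars Prim) lhs).
Definition canon_rhs (Prim : Type) (rhs : list (clause Prim)) : assertion Prim :=
  big_or (map (@star_vars Prim) rhs).

Definition canonical (Prim : Type) (lhs rhs : list (clause Prim)) : Prop :=
  lhs <> [] /\
  (forall c, In c lhs -> avar_free (fst c)) /\
  (forall c, In c rhs -> avar_free (fst c)) /\
  (forall c b, In c rhs -> In b (snd c) -> exists c', In c' lhs /\ In b (snd c')).

Section Canon.
Variable Prim : Type.
Variables lhs rhs : list (clause Prim).
Definition dflt : clause Prim := (ATrue, []).
Definition phi_ (i : nat) : assertion Prim := fst (nth i lhs dflt).
Definition psi_ (j : nat) : assertion Prim := fst (nth j rhs dflt).
Definition avars (i : nat) : list nat := snd (nth i lhs dflt).
Definition bvars (j : nat) : list nat := snd (nth j rhs dflt).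
Definition inV (c : nat) : Prop := exists i, i < length lhs /\ In c (avars i).
Definition Pi (i c : nat) : nat := count_occ Nat.eq_dec (avars i) c.
Definition Om (j c : nat) : nat := count_occ Nat.eq_dec (bvars j) c.
Definition Pi_ge (i j : nat) : Prop := forall c, inV c -> Om j c <= Pi i c.
End Canon.

(* Parametricity Condition (indices 0-based: i < M, j < N) *)
Definition parametricity (Prim : Type) prim_sem (lhs rhs : list (clause Prim)) (eta : env) : Prop :=
  forall (h : heap) (hs : nat -> heap),
    (forall i, i < length lhs -> hsub (hs i) h /\ sem1 prim_sem (phi_ lhs i) eta (hs i)) ->
    (exists i j, i < length lhs /\ j < length rhs /\
        sem1 prim_sem (psi_ rhs j) eta (hs i) /\ Pi_ge lhs rhs i j)
    \/
    (exists j, j < length rhs /\ bvars rhs j = [] /\ sem1 prim_sem (psi_ rhs j) eta h).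

(* Main.v *)
Require Import Defs.
From Stdlib Require Import ZArith List PeanoNat.
From Stdlib Require Import ClassicalEpsilon Classical FunctionalExtensionality ProofIrrelevance Lia.
Import ListNotations.

Lemma heap_ext (a b : heap) : (forall p, hget a p = hget b p) -> a = b.
Proof.
  destruct a as [fa Ha], b as [fb Hb]; unfold hget; simpl; intro E.
  assert (fa = fb) by (apply functional_extensionality; exact E). subst.
  f_equal; apply proof_irrelevance.
Qed.

Lemma fin1 (k : Fin.t 1) : k = Fin.F1.
Proof.
  apply (Fin.caseS' k); [reflexivity|]. intro p; apply (Fin.case0 (fun _ => _)); exact p.
Qed.

Lemma hvec1 (v : hvec 1) : v = (fun _ => v Fin.F1).
Proof. apply functional_extensionality; intro k; rewrite (fin1 k); reflexivity. Qed.

Definition hfilter (X : heap) (P : positive -> Prop) : heap.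
Proof.
  refine (exist _ (fun p => if excluded_middle_informative (P p) then hget X p else None) _).
  destruct (proj2_sig X) as [l Hl]. exists l. intros p Hp.
  destruct (excluded_middle_informative (P p)); [apply Hl; exact Hp| congruence].
Defined.

Lemma hfilter_get X P p :
  hget (hfilter X P) p = if excluded_middle_informative (P p) then hget X p else None.
Proof. reflexivity. Qed.

Definition hdiff (X Y : heap) : heap := hfilter X (fun p => hget Y p = None).

Lemma hsub_trans a b c : hsub a b -> hsub b c -> hsub a c.
Proof. unfold hsub; eauto. Qed.

Lemma hsub_refl a : hsub a a.
Proof. unfold hsub; eauto. Qed.

Lemma sem_mono (Prim : Type) (prim_sem : Prim -> env -> heap -> Prop) (n : nat) (rho : nat -> hvec n -> Prop) :
  (forall x, upclosed (rho x)) ->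
  forall a eta g h, sem prim_sem rho a eta g -> (forall k, hsub (g k) (h k)) ->
  sem prim_sem rho a eta h.
Proof.
  intros Hup a; induction a; intros eta g h Hs Hsub; simpl in *.
  - destruct Hs as [f [Hf Hk]]. exists f; split; auto. intro k; eapply hsub_trans; eauto.
  - eapply Hup; eauto.
  - auto.
  - auto.
  - destruct Hs; split; eauto.
  - destruct Hs; [left|right]; eauto.
  - destruct Hs as [f [g' [H1 [H2 H3]]]].
    exists (fun k => hdiff (h k) (g' k)), g'. split; [|split].
    + eapply IHa1; eauto. intros k p v Hp. unfold hdiff; rewrite hfilter_get.
      destruct (H3 k) as [Hd Hu].
      destruct (excluded_middle_informative (hget (g' k) p = None)) as [e|e].
      * apply Hsub. rewrite Hu, Hp. reflexivity.
      * destruct (Hd p); congruence.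
    + exact H2.
    + intro k. destruct (H3 k) as [Hd Hu]. split.
      * intro p. unfold hdiff; rewrite hfilter_get.
        destruct (excluded_middle_informative (hget (g' k) p = None)); auto.
      * intro p. unfold hdiff; rewrite hfilter_get.
        destruct (excluded_middle_informative (hget (g' k) p = None)) as [e|e].
        -- destruct (hget (h k) p); [reflexivity|]. rewrite e; reflexivity.
        -- destruct (hget (g' k) p) as [w|] eqn:Ew; [|congruence].
           apply Hsub. rewrite Hu.
           destruct (Hd p) as [F|F]; [rewrite F; exact Ew| congruence].
  - destruct Hs as [v Hv]; exists v; eauto.
  - intro v; eauto.
Qed.

Lemma sem_avar_free (Prim : Type) (prim_sem : Prim -> env -> heap -> Prop) (n : nat) (rho rho' : nat -> hvec n -> Prop) :
  forall a, avar_free a -> forall eta h,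
  sem prim_sem rho a eta h <-> sem prim_sem rho' a eta h.
Proof.
  intros a; induction a; intros Ha eta h; simpl in *; try tauto.
  - rewrite IHa1, IHa2 by tauto; tauto.
  - rewrite IHa1, IHa2 by tauto; tauto.
  - split; intros [f [g [H1 [H2 H3]]]]; exists f, g;
      (split; [apply IHa1|split; [apply IHa2|]]); tauto.
  - split; intros [v Hv]; exists v; apply IHa; auto.
  - split; intros Hv v; apply IHa; auto.
Qed.
Fixpoint starP (P : heap -> Prop) (Qs : list (heap -> Prop)) (X : heap) : Prop :=
  match Qs with
  | [] => P X
  | Q :: Qs' => starP (fun Y => exists Y1 Y2, P Y1 /\ Q Y2 /\ hunion Y1 Y2 Y) Qs' X
  end.

Lemma starP_iff Qs : forall (P P' : heap -> Prop) X, (forall Y, P Y <-> P' Y) ->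
  (starP P Qs X <-> starP P' Qs X).
Proof.
  induction Qs as [|Q Qs IH]; intros P P' X E; simpl; [apply E|].
  apply IH. intro Y. split; intros [Y1 [Y2 [A B]]]; exists Y1, Y2; rewrite E in *; tauto.
Qed.

Lemma sem_star1 (Prim : Type) (prim_sem : Prim -> env -> heap -> Prop)
  (rho : nat -> hvec 1 -> Prop) A B eta Y :
  sem prim_sem rho (AStar A B) eta (fun _ => Y) <->
  exists Y1 Y2, sem prim_sem rho A eta (fun _ => Y1) /\ sem prim_sem rho B eta (fun _ => Y2)
     /\ hunion Y1 Y2 Y.
Proof.
  simpl; split.
  - intros [f [g [H1 [H2 H3]]]]. exists (f Fin.F1), (g Fin.F1).
    rewrite (hvec1 f) in H1; rewrite (hvec1 g) in H2. auto.
  - intros [Y1 [Y2 [H1 [H2 H3]]]]. exists (fun _ => Y1), (fun _ => Y2). auto.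
Qed.

Lemma sem_fold (Prim : Type) (prim_sem : Prim -> env -> heap -> Prop)
  (rho : nat -> hvec 1 -> Prop) eta l : forall acc X,
  sem prim_sem rho (fold_left (fun acc a => AStar acc (AVar a)) l acc) eta (fun _ => X) <->
  starP (fun Y => sem prim_sem rho acc eta (fun _ => Y))
        (map (fun a Y => rho a (fun _ => Y)) l) X.
Proof.
  induction l as [|a l IH]; intros acc X; simpl; [tauto|].
  rewrite IH. apply starP_iff. intro Y. rewrite sem_star1. simpl. tauto.
Qed.

Definition hunionH (a b : heap) : heap.
Proof.
  refine (exist _ (fun p => match hget a p with Some v => Some v | None => hget b p end) _).
  destruct (proj2_sig a) as [la Ha], (proj2_sig b) as [lb Hb]. exists (la ++ lb).
  intros p Hp. apply in_or_app. unfold hget in *.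
  destruct (proj1_sig a p) eqn:E; [left; apply Ha; congruence| right; apply Hb; auto].
Defined.

Lemma hunionH_get a b p :
  hget (hunionH a b) p = match hget a p with Some v => Some v | None => hget b p end.
Proof. reflexivity. Qed.

Definition dQ : heap -> Prop := fun _ => True.

Lemma starP_intro Qs : forall (P : heap -> Prop) (X g : heap) (fs : nat -> heap),
  P g ->
  (forall k, k < length Qs -> nth k Qs dQ (fs k)) ->
  (forall k, k < length Qs -> hdisj g (fs k)) ->
  (forall k k', k < length Qs -> k' < length Qs -> k <> k' -> hdisj (fs k) (fs k')) ->
  (forall p v, hget X p = Some v <->
     (hget g p = Some v \/ exists k, k < length Qs /\ hget (fs k) p = Some v)) ->
  starP P Qs X.
Proof.
  induction Qs as [|Q Qs IH]; intros P X g fs HP HQ Hd1 Hd2 HX; simpl in *.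
  - replace X with g; auto. apply heap_ext. intro p.
    destruct (hget g p) eqn:E.
    + symmetry; apply HX; auto.
    + destruct (hget X p) eqn:E2; auto. apply HX in E2. destruct E2 as [E2|[k [Hk _]]]; [congruence|lia].
  - apply (IH _ X (hunionH g (fs 0)) (fun k => fs (S k))).
    + exists g, (fs 0). split; [auto|split; [apply (HQ 0); lia|]].
      split; [apply Hd1; lia|]. intro p; reflexivity.
    + intros k Hk. apply (HQ (S k)); lia.
    + intros k Hk p. rewrite hunionH_get.
      destruct (Hd1 (S k) ltac:(lia) p) as [E|E]; [rewrite E|auto].
      destruct (Hd2 0 (S k) ltac:(lia) ltac:(lia) ltac:(lia) p); auto.
    + intros k k' Hk Hk' Hne. apply Hd2; lia.
    + intros p v. rewrite HX, hunionH_get. split.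
      * intros [E|[k [Hk E]]]; [left; rewrite E; auto|].
        destruct k as [|k]; [left|right; exists k; split; [lia|auto]].
        destruct (Hd1 0 ltac:(lia) p) as [F|F]; [rewrite F; auto|congruence].
      * intros [E|[k [Hk E]]].
        -- destruct (hget g p) eqn:F; [left; auto|right; exists 0; split; [lia|auto]].
        -- right; exists (S k); split; [lia|auto].
Qed.

Lemma starP_elim Qs : forall (P : heap -> Prop) (X : heap), starP P Qs X ->
  exists g (fs : nat -> heap), P g /\ hsub g X /\
  (forall k, k < length Qs -> nth k Qs dQ (fs k) /\ hsub (fs k) X /\ hdisj g (fs k)) /\
  (forall k k', k < length Qs -> k' < length Qs -> k <> k' -> hdisj (fs k) (fs k')).
Proof.
  induction Qs as [|Q Qs IH]; intros P X HS; simpl in *.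
  - exists X, (fun _ => X). split; [auto|split;[apply hsub_refl|split; intros; lia]].
  - destruct (IH _ _ HS) as [g' [fs' [[Y1 [Y2 [HP [HQ [Hd Hu]]]]] [Hsg [Hk Hkk]]]]].
    assert (S1 : hsub Y1 g') by (intros p v E; rewrite Hu, E; auto).
    assert (S2 : hsub Y2 g') by (intros p v E; rewrite Hu; destruct (Hd p) as [F|F]; [rewrite F; auto|congruence]).
    assert (Dg : forall Z f, hsub Z g' -> hdisj g' f -> hdisj Z f).
    { intros Z f HZ Hgf p. destruct (Hgf p) as [F|F]; [|auto]. left.
      destruct (hget Z p) eqn:E; auto. apply HZ in E; congruence. }
    exists Y1, (fun k => match k with 0 => Y2 | S k => fs' k end).
    split; [auto|split; [eapply hsub_trans; eauto|split]].
    + intros [|k] Hk'.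
      * split; auto. split; [eapply hsub_trans; eauto|auto].
      * destruct (Hk k ltac:(lia)) as [A [B C]]. split; [exact A|split; [exact B|apply Dg; auto]].
    + intros [|k] [|k'] Hk1 Hk2 Hne; try lia.
      * apply Dg; auto. apply Hk; lia.
      * intro p; destruct (Dg Y2 (fs' k) S2 (proj2 (proj2 (Hk k ltac:(lia)))) p); auto.
      * apply Hkk; lia.
Qed.
Lemma big_and_intro (Prim : Type) (prim_sem : Prim -> env -> heap -> Prop) n rho eta h l :
  (forall a, In a l -> sem prim_sem (n:=n) rho a eta h) -> sem prim_sem rho (big_and l) eta h.
Proof.
  induction l as [|x l IH]; intro Hl; simpl; [auto|].
  destruct l as [|y l]; [apply Hl; simpl; auto|].
  split; [apply Hl; simpl; auto|]. apply IH. intros a Ha; apply Hl; simpl in *; tauto.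
Qed.

Lemma big_or_elim (Prim : Type) (prim_sem : Prim -> env -> heap -> Prop) n rho eta h l :
  sem prim_sem (n:=n) rho (big_or l) eta h -> exists a, In a l /\ sem prim_sem rho a eta h.
Proof.
  induction l as [|x l IH]; intro Hl; simpl in *; [contradiction|].
  destruct l as [|y l]; [exists x; auto|].
  destruct Hl as [Hl|Hl]; [exists x; auto|]. destruct (IH Hl) as [a [A B]]; exists a; simpl in *; auto.
Qed.

Definition pos (l : list nat) (c : nat) : list nat :=
  filter (fun r => Nat.eqb (nth r l 0) c) (seq 0 (length l)).

Lemma filter_shift a l c s :
  length (filter (fun r => Nat.eqb (nth r (a :: l) 0) c) (map S s)) =
  length (filter (fun r => Nat.eqb (nth r l 0) c) s).
Proof. induction s as [|x s IH]; simpl; [auto|]. destruct (nth x l 0 =? c); simpl; auto. Qed.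

Lemma pos_len l c : length (pos l c) = count_occ Nat.eq_dec l c.
Proof.
  induction l as [|a l IH]; [reflexivity|].
  transitivity (length (filter (fun r => Nat.eqb (nth r (a::l) 0) c) (0 :: map S (seq 0 (length l))))).
  { unfold pos. simpl length. now rewrite <- seq_shift. }
  cbn [filter]. change (nth 0 (a::l) 0) with a. simpl count_occ.
  destruct (Nat.eq_dec a c) as [E|E].
  - subst. rewrite Nat.eqb_refl. cbn [length]. rewrite filter_shift. fold (pos l c). rewrite IH. reflexivity.
  - apply Nat.eqb_neq in E. rewrite E. rewrite filter_shift. fold (pos l c). rewrite IH. reflexivity.
Qed.

Lemma In_pos l c r : In r (pos l c) <-> r < length l /\ nth r l 0 = c.
Proof.
  unfold pos. rewrite filter_In, in_seq, Nat.eqb_eq. lia.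
Qed.

Lemma NoDup_pos l c : NoDup (pos l c).
Proof. apply NoDup_filter, seq_NoDup. Qed.

Lemma count_inj (la lb : list nat) c (f : nat -> nat) :
  (forall r, r < length lb -> nth r lb 0 = c -> f r < length la /\ nth (f r) la 0 = c) ->
  (forall r r', r < length lb -> r' < length lb -> nth r lb 0 = c -> nth r' lb 0 = c ->
     f r = f r' -> r = r') ->
  count_occ Nat.eq_dec lb c <= count_occ Nat.eq_dec la c /\
  (count_occ Nat.eq_dec lb c = count_occ Nat.eq_dec la c ->
   forall k, k < length la -> nth k la 0 = c ->
   exists r, r < length lb /\ nth r lb 0 = c /\ f r = k).
Proof.
  intros Hf Hinj.
  assert (ND : NoDup (map f (pos lb c))).
  { apply NoDup_map_NoDup_ForallPairs; [|apply NoDup_pos].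
    intros x y Hx Hy E. apply In_pos in Hx, Hy. apply Hinj; tauto. }
  assert (INC : incl (map f (pos lb c)) (pos la c)).
  { intros k Hk. apply in_map_iff in Hk. destruct Hk as [r [E Hr]]. subst.
    apply In_pos in Hr. apply In_pos. apply Hf; tauto. }
  rewrite <- !pos_len. split.
  - rewrite <- (length_map f). apply NoDup_incl_length; auto.
  - intros E k Hk Hk'.
    assert (INC2 : incl (pos la c) (map f (pos lb c))).
    { apply NoDup_length_incl; auto. rewrite length_map; lia. }
    assert (Hin : In k (pos la c)) by (apply In_pos; auto).
    apply INC2, in_map_iff in Hin. destruct Hin as [r [Er Hr]]. apply In_pos in Hr.
    exists r; tauto.
Qed.

Lemma sigma_exists (Bpos : nat -> nat -> Prop) (W : nat) :
  (forall i k, Bpos i k -> i < W /\ k < W) ->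
  exists K (sg : nat -> nat -> nat),
  (forall n i, (exists k, Bpos i k) -> Bpos i (sg n i)) /\
  (forall i i' k k', i <> i' -> Bpos i k -> Bpos i' k' -> exists n, n < K /\ sg n i = k /\ sg n i' = k') /\
  (forall i k, Bpos i k -> exists n, n < K /\ sg n i = k).
Proof.
  intro HW.
  pose (bp i := epsilon (inhabits 0) (fun k => Bpos i k)).
  pose (Q := list_prod (list_prod (seq 0 W) (seq 0 W)) (list_prod (seq 0 W) (seq 0 W))).
  pose (sg n i := match nth n Q ((0,0),(0,0)) with ((a,b),(a',b')) =>
     let cand := if a =? i then b else if a' =? i then b' else bp i in
     if excluded_middle_informative (Bpos i cand) then cand else bp i end).
  assert (HQ : forall a b a' b', a < W -> b < W -> a' < W -> b' < W ->
            exists n, n < length Q /\ nth n Q ((0,0),(0,0)) = ((a,b),(a',b'))).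
  { intros. apply In_nth. unfold Q. rewrite !in_prod_iff, !in_seq. lia. }
  exists (length Q), sg. split; [|split].
  - intros n i Hi. unfold sg. destruct (nth n Q _) as [[a b] [a' b']].
    destruct (excluded_middle_informative _); auto. apply epsilon_spec; auto.
  - intros i i' k k' Hne Hk Hk'.
    destruct (HW _ _ Hk), (HW _ _ Hk').
    destruct (HQ i k i' k') as [n [Hn E]]; try lia.
    exists n; split; auto. unfold sg; rewrite E. rewrite Nat.eqb_refl.
    destruct (excluded_middle_informative (Bpos i k)); [|contradiction]. split; auto.
    apply Nat.eqb_neq in Hne. rewrite Hne, Nat.eqb_refl.
    destruct (excluded_middle_informative (Bpos i' k')); [auto|contradiction].
  - intros i k Hk. destruct (HW _ _ Hk).
    destruct (HQ i k i k) as [n [Hn E]]; try lia.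
    exists n; split; auto. unfold sg; rewrite E. rewrite Nat.eqb_refl.
    destruct (excluded_middle_informative (Bpos i k)); [auto|contradiction].
Qed.
Lemma hfilter_sub X P p v : hget (hfilter X P) p = Some v -> hget X p = Some v.
Proof. rewrite hfilter_get. destruct (excluded_middle_informative (P p)); congruence. Qed.
Lemma hfilter_in X P p : P p -> hget (hfilter X P) p = hget X p.
Proof. rewrite hfilter_get. destruct (excluded_middle_informative (P p)); tauto. Qed.
Lemma hfilter_out X P p : ~ P p -> hget (hfilter X P) p = None.
Proof. rewrite hfilter_get. destruct (excluded_middle_informative (P p)); tauto. Qed.

Lemma nth_map_lt A B (f : A -> B) l k d d' : k < length l -> nth k (map f l) d = f (nth k l d').
Proof. intro Hk. rewrite (nth_indep _ d (f d')) by (rewrite length_map; auto). apply map_nth. Qed.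

Lemma le_list_max x l : In x l -> x <= list_max l.
Proof. intro Hx. pose proof (proj1 (list_max_le l (list_max l)) (le_n _)) as F.
  rewrite Forall_forall in F; auto. Qed.

Lemma heap_support (h : heap) : exists l, forall p, hget h p <> None -> In p l.
Proof. exact (proj2_sig h). Qed.

Lemma mk_heap (f : positive -> option Z) (l : list positive) :
  (forall p, f p <> None -> In p l) -> exists H : heap, forall p, hget H p = f p.
Proof. intro Hl. exists (exist _ f (ex_intro _ l Hl)). reflexivity. Qed.
Theorem mainTheorem5 (Prim : Type) (prim_sem : Prim -> env -> heap -> Prop)
  (lhs rhs : list (clause Prim)) (eta : env) :
  canonical lhs rhs ->
  (* (S1) *)
  (forall i j, i < length lhs -> j < length rhs -> ~ Pi_ge lhs rhs i j ->
     exists c, inV lhs c /\ Pi lhs i c < Om rhs j c /\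
       (forall k l, k < length lhs -> l < length rhs -> Pi_ge lhs rhs k l ->
          Pi lhs k c = Om rhs l c)) ->
  (* (S2) *)
  (forall j, j < length rhs ->
     exists c, inV lhs c /\ 0 < Om rhs j c /\
       (forall k l, k < length lhs -> l < length rhs -> Pi_ge lhs rhs k l ->
          Pi lhs k c = Om rhs l c)) ->
  unary_valid prim_sem (canon_lhs lhs) (canon_rhs rhs) eta ->
  parametricity prim_sem lhs rhs eta.
Proof.
  intros Hcan HS1 HS2 Hval h hs Hhs. left.
  destruct Hcan as [_ [HcanL [HcanR _]]].
  set (M := length lhs) in *. set (N := length rhs) in *.
  pose (B c := inV lhs c /\ forall k l, k < M -> l < N -> Pi_ge lhs rhs k l ->
                  Pi lhs k c = Om rhs l c).
  pose (Bpos i k := i < M /\ k < length (avars lhs i) /\ B (nth k (avars lhs i) 0)).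
  pose (W := S (M + list_max (map (fun c : clause Prim => length (snd c)) lhs))).
  assert (HW : forall i k, Bpos i k -> i < W /\ k < W).
  { intros i k [Hi [Hk _]]. unfold W. split; [lia|].
    assert (length (avars lhs i) <= list_max (map (fun c : clause Prim => length (snd c)) lhs)).
    { apply le_list_max. apply in_map_iff. exists (nth i lhs (dflt Prim)). split; [reflexivity|].
      apply nth_In; auto. }
    lia. }
  destruct (sigma_exists Bpos W HW) as [K [sg [sg1 [sg2 sg3]]]].
  pose (bp i := epsilon (inhabits 0) (fun k => Bpos i k)).
  assert (Hbp : forall i, (exists k, Bpos i k) -> Bpos i (bp i)).
  { intros i Hi; apply epsilon_spec; auto. }
  destruct (heap_support h) as [lh Hlh].
  pose (B0 := list_max (map Pos.to_nat lh)).
  pose (isTok p := B0 < Pos.to_nat p /\ Pos.to_nat p <= B0 + K).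
  pose (tokidx p := Pos.to_nat p - S B0).
  pose (tokloc n := Pos.of_nat (S B0 + n)).
  assert (notok : forall p, hget h p <> None -> ~ isTok p).
  { intros p Hp [T1 _]. apply Hlh in Hp.
    assert (Pos.to_nat p <= B0) by (apply le_list_max, in_map; auto). lia. }
  assert (Htokloc : forall n, n < K -> isTok (tokloc n) /\ tokidx (tokloc n) = n).
  { intros n Hn. unfold isTok, tokidx, tokloc. rewrite Nat2Pos.id by lia. lia. }
  assert (Htoksup : forall p, isTok p -> In p (map tokloc (seq 0 K))).
  { intros p [T1 T2]. apply in_map_iff. exists (tokidx p). split.
    - unfold tokloc, tokidx. replace (S B0 + (Pos.to_nat p - S B0)) with (Pos.to_nat p) by lia.
      apply Pos2Nat.id.
    - apply in_seq. unfold tokidx. lia. }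
  destruct (mk_heap (fun p => if excluded_middle_informative (isTok p) then Some 0%Z else hget h p)
              (lh ++ map tokloc (seq 0 K))) as [H HH].
  { intros p Hp. apply in_or_app. destruct (excluded_middle_informative (isTok p)).
    - right; auto.
    - left; auto. }
  assert (HHtok : forall p, isTok p -> hget H p = Some 0%Z).
  { intros p Hp; rewrite HH; destruct (excluded_middle_informative (isTok p)); tauto. }
  assert (HHh : forall p, ~ isTok p -> hget H p = hget h p).
  { intros p Hp; rewrite HH; destruct (excluded_middle_informative (isTok p)); tauto. }
  pose (inPiece i k p := (isTok p /\ sg (tokidx p) i = k) \/
                         (~ isTok p /\ k = bp i /\ hget (hs i) p = None)).
  pose (piece i k := hfilter H (inPiece i k)).
  pose (R c Y := B c -> exists i k, i < M /\ k < length (avars lhs i) /\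
                   nth k (avars lhs i) 0 = c /\ hsub (piece i k) Y).
  pose (rho x (v : hvec 1) := R x (v Fin.F1)).
  assert (Hup : forall x, upclosed (rho x)).
  { intros x g g' Hg Hs HB. destruct (Hg HB) as [i [k [A [Bk [C D]]]]].
    exists i, k; repeat split; auto. eapply hsub_trans; eauto. }
  assert (Htokpiece : forall n i k, n < K -> sg n i = k -> hget (piece i k) (tokloc n) = Some 0%Z).
  { intros n i k Hn E. destruct (Htokloc n Hn) as [T1 T2]. unfold piece.
    rewrite hfilter_in; [auto|]. left. rewrite T2; auto. }
  assert (Hne : forall i k, Bpos i k -> exists p, hget (piece i k) p = Some 0%Z).
  { intros i k Hb. destruct (sg3 i k Hb) as [n [Hn E]]. exists (tokloc n); auto. }
  assert (Hhsh : forall i p v, i < M -> hget (hs i) p = Some v -> hget h p = Some v).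
  { intros i p v Hi E. apply (proj1 (Hhs i Hi)); auto. }
  assert (Hrhs : sem prim_sem rho (canon_rhs rhs) eta (fun _ => H)).
  { apply Hval; auto. unfold canon_lhs. apply big_and_intro. intros a Ha.
    apply in_map_iff in Ha. destruct Ha as [cl [Ea Hcl]]. subst a.
    destruct (In_nth _ _ (dflt Prim) Hcl) as [i [Hi Ecl]]. rewrite <- Ecl.
    unfold star_vars. rewrite sem_fold.
    pose (cnd p := exists k, k < length (avars lhs i) /\ Bpos i k /\ inPiece i k p).
    apply (starP_intro _ _ _ (hfilter H (fun p => ~ cnd p))
                          (fun k => hfilter H (fun p => Bpos i k /\ inPiece i k p))).
    - refine (proj2 (sem_avar_free Prim prim_sem 1 rho (fun _ _ => True) _ _ eta _) _).
      { apply HcanL. apply nth_In; auto. }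
      apply (sem_mono Prim prim_sem 1 (fun _ _ => True) (fun x _ _ _ _ => I) _ eta (fun _ => hs i)).
      { apply (proj2 (Hhs i Hi)). }
      intros _ p v E. assert (Eh := Hhsh i p v Hi E).
      assert (nt := notok p ltac:(congruence)).
      rewrite hfilter_in; [rewrite HHh; auto|].
      intros [k [_ [_ [[T _]|[_ [_ F]]]]]]; [contradiction|congruence].
    - intros k Hk. rewrite length_map in Hk. rewrite (nth_map_lt _ _ _ _ _ _ 0 Hk).
      intro HB. exists i, k. repeat split; auto.
      intros p v E. rewrite hfilter_in; [apply (hfilter_sub _ _ _ _ E)|].
      split; [split; [auto|split; auto]|]. unfold piece in E. rewrite hfilter_get in E.
      destruct (excluded_middle_informative (inPiece i k p)); [auto|congruence].
    - intros k Hk p. rewrite !hfilter_get.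
      destruct (excluded_middle_informative (~ cnd p)) as [e|e]; [|auto].
      destruct (excluded_middle_informative (Bpos i k /\ inPiece i k p)) as [e'|e']; [|auto].
      exfalso; apply e. exists k. rewrite length_map in Hk. tauto.
    - intros k k' Hk Hk' Hkk p. rewrite !hfilter_get.
      destruct (excluded_middle_informative (Bpos i k /\ inPiece i k p)) as [[_ e]|e]; [|auto].
      destruct (excluded_middle_informative (Bpos i k' /\ inPiece i k' p)) as [[_ e']|e']; [|auto].
      exfalso; apply Hkk. destruct e as [[T1 T2]|[T1 [T2 _]]], e' as [[T1' T2']|[T1' [T2' _]]];
        try contradiction; congruence.
    - intros p v. rewrite length_map. split.
      + intro E. destruct (classic (cnd p)) as [C|C].
        * right. destruct C as [k [Hk [Hb Hp]]]. exists k; split; auto.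
          rewrite hfilter_in; auto.
        * left. rewrite hfilter_in; auto.
      + intros [E|[k [_ E]]]; eapply hfilter_sub; eauto. }
  unfold canon_rhs in Hrhs. apply big_or_elim in Hrhs. destruct Hrhs as [a [Ha Hsa]].
  apply in_map_iff in Ha. destruct Ha as [cl [Ea Hcl]]. subst a.
  destruct (In_nth _ _ (dflt Prim) Hcl) as [j [Hj Ecl]]. rewrite <- Ecl in Hsa.
  unfold star_vars in Hsa. rewrite sem_fold in Hsa.
  apply starP_elim in Hsa. destruct Hsa as [g [fs [Pg [HgH [Hk Hkk]]]]].
  rewrite length_map in Hk, Hkk.
  fold (bvars rhs j) in Hk, Hkk.
  set (lb := bvars rhs j) in *.
  assert (HR : forall r, r < length lb -> R (nth r lb 0) (fs r)).
  { intros r Hr. destruct (Hk r Hr) as [A _]. rewrite (nth_map_lt _ _ _ _ _ _ 0 Hr) in A. exact A. }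
  destruct (HS2 j Hj) as [c0 [Hc0V [Hc0pos Hc0bal]]].
  assert (HBc0 : B c0) by (split; auto).
  assert (Hin0 : In c0 lb) by (apply (count_occ_In Nat.eq_dec); exact Hc0pos).
  destruct (In_nth _ _ 0 Hin0) as [r0 [Hr0 Er0]].
  destruct (HR r0 Hr0 ltac:(rewrite Er0; exact HBc0)) as [i0 [k0 [Hi0 [Hk0 [Ek0 Hs0]]]]].
  assert (HBk0 : Bpos i0 k0) by (split; [auto|split; [auto|]]; rewrite Ek0, Er0; exact HBc0).
  assert (ClA : forall r, r < length lb -> B (nth r lb 0) ->
            exists k, k < length (avars lhs i0) /\ nth k (avars lhs i0) 0 = nth r lb 0 /\
                      hsub (piece i0 k) (fs r)).
  { intros r Hr HB. destruct (Nat.eq_dec r r0) as [->|Hne0].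
    - exists k0; auto.
    - destruct (HR r Hr HB) as [i [k [Hi [Hki [Eki Hsi]]]]].
      destruct (Nat.eq_dec i i0) as [->|Hii]; [exists k; auto|].
      exfalso.
      assert (Hb : Bpos i k) by (split; [auto|split; [auto|]]; rewrite Eki; exact HB).
      destruct (sg2 i i0 k k0 Hii Hb HBk0) as [n [Hn [E1 E2]]].
      destruct (Hkk r r0 Hr Hr0 Hne0 (tokloc n)) as [F|F].
      + rewrite (Hsi _ _ (Htokpiece n i k Hn E1)) in F; congruence.
      + rewrite (Hs0 _ _ (Htokpiece n i0 k0 Hn E2)) in F; congruence. }
  pose (kr r := epsilon (inhabits 0) (fun k => k < length (avars lhs i0) /\
                   nth k (avars lhs i0) 0 = nth r lb 0 /\ hsub (piece i0 k) (fs r))).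
  assert (Hkr : forall r, r < length lb -> B (nth r lb 0) ->
            kr r < length (avars lhs i0) /\ nth (kr r) (avars lhs i0) 0 = nth r lb 0 /\
            hsub (piece i0 (kr r)) (fs r)).
  { intros r Hr HB. apply epsilon_spec. apply ClA; auto. }
  assert (ClB : forall c, B c ->
     count_occ Nat.eq_dec lb c <= count_occ Nat.eq_dec (avars lhs i0) c /\
     (count_occ Nat.eq_dec lb c = count_occ Nat.eq_dec (avars lhs i0) c ->
      forall k, k < length (avars lhs i0) -> nth k (avars lhs i0) 0 = c ->
      exists r, r < length lb /\ nth r lb 0 = c /\ kr r = k)).
  { intros c HB. apply count_inj.
    - intros r Hr Er. destruct (Hkr r Hr ltac:(rewrite Er; auto)) as [A [Bq _]].
      split; congruence.
    - intros r r' Hr Hr' Er Er' Ekr. destruct (Nat.eq_dec r r') as [|Hne']; [auto|exfalso].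
      destruct (Hkr r Hr ltac:(rewrite Er; auto)) as [A [Bq C]].
      destruct (Hkr r' Hr' ltac:(rewrite Er'; auto)) as [A' [Bq' C']].
      assert (Hb : Bpos i0 (kr r)) by (split; [auto|split; [auto|]]; rewrite Bq, Er; exact HB).
      destruct (Hne _ _ Hb) as [p Hp].
      destruct (Hkk r r' Hr Hr' Hne' p) as [F|F].
      + rewrite (C _ _ Hp) in F; congruence.
      + rewrite Ekr in Hp. rewrite (C' _ _ Hp) in F; congruence. }
  assert (ClC : Pi_ge lhs rhs i0 j).
  { apply NNPP. intro Hn. destruct (HS1 i0 j Hi0 Hj Hn) as [c [Hc1 [Hc2 Hc3]]].
    destruct (ClB c (conj Hc1 Hc3)) as [Hle _]. unfold Pi, Om in Hc2. fold lb in Hc2. lia. }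
  assert (ClD : forall k, Bpos i0 k -> exists r, r < length lb /\ hsub (piece i0 k) (fs r)).
  { intros k [_ [Hk1 Hk2]]. set (c := nth k (avars lhs i0) 0) in *.
    destruct (ClB c Hk2) as [_ Hsurj].
    assert (Eq : Pi lhs i0 c = Om rhs j c) by (apply (proj2 Hk2); auto).
    unfold Pi, Om in Eq. fold lb in Eq.
    destruct (Hsurj (eq_sym Eq) k Hk1 eq_refl) as [r [Hr [Er Ekr]]].
    exists r; split; auto. destruct (Hkr r Hr ltac:(rewrite Er; auto)) as [_ [_ C]].
    rewrite Ekr in C; exact C. }
  exists i0, j. split; [exact Hi0|split; [exact Hj|split; [|exact ClC]]].
  assert (Hgs : hsub g (hs i0)).
  { intros p v Ep. assert (EH := HgH _ _ Ep).
    destruct (hget (hs i0) p) as [w|] eqn:Ew.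
    - assert (Eh := Hhsh i0 p w Hi0 Ew).
      assert (nt := notok p ltac:(congruence)).
      rewrite HHh in EH by auto. congruence.
    - exfalso.
      assert (Hex : exists k, Bpos i0 k /\ inPiece i0 k p).
      { destruct (classic (isTok p)) as [T|T].
        - exists (sg (tokidx p) i0). split; [apply sg1; exists k0; auto|left; auto].
        - exists (bp i0). split; [apply Hbp; exists k0; auto|right; auto]. }
      destruct Hex as [k [Hb Hp]].
      destruct (ClD k Hb) as [r [Hr Hsr]].
      assert (Ef : hget (fs r) p = Some v).
      { apply Hsr. unfold piece. rewrite hfilter_in; auto. }
      destruct (proj2 (proj2 (Hk r Hr)) p); congruence. }
  unfold sem1, psi_.
  apply (sem_mono Prim prim_sem 1 (fun _ _ => True) (fun x _ _ _ _ => I) _ eta (fun _ => g));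
    [|intros _; exact Hgs].
  refine (proj1 (sem_avar_free Prim prim_sem 1 rho (fun _ _ => True) _ _ eta _) Pg).
  apply HcanR. apply nth_In; auto.
Qed.
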